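(* Let $S$ be a numerical semigroup and $G=G(S)$. Let $y$ be a nonloopy vertex of $G$. Then there is no neighbor $z$ of $y$ in $G$ with $z-y\in S^*$.
   Context: A numerical semigroup is a subset $S\subseteq\mathbb N$ containing $0$, closed under addition, with finite complement; $S^*=S\setminus\{0\}$, $m=\min S^*$, $X=\{s\in S^*: s-m\notin S\}$. The graph $G(S)$ has edge set all subsets $\{x,y\}\subseteq X$ ($x=y$ allowed) with $x+y\in X$, and vertex set the endvertices of these edges. A vertex $y$ is nonloopy if $2y\notin X$; $z$ is a neighbor of $y$ if $z\in X$ and $y+z\in X$. *)

(* Defs.v *)
From mathcomp Require Import all_boot.
From Stdlib Require Import ClassicalEpsilon.
Set Implicit Arguments. Unset Strict Implicit. Unset Printing Implicit Defensive.

Definition numerical_semigroup (S : pred nat) : Prop :=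
  [/\ S 0,
      (forall x y, S x -> S y -> S (x + y)) &
      (exists N, forall n, N <= n -> S n)].

Definition Sstar (S : pred nat) (x : nat) : Prop := S x /\ x != 0.

(* m = min S^* (chosen by Hilbert's epsilon; for a numerical semigroup
   this is the unique least nonzero element). *)
Definition mult (S : pred nat) : nat :=
  epsilon (inhabits 0)
    (fun m => Sstar S m /\ forall s, Sstar S s -> m <= s).

(* X = { s in S^* : s - m notin S }  (s >= m for s in S^*, so nat
   subtraction is exact here) *)
Definition inX (S : pred nat) (s : nat) : Prop :=
  Sstar S s /\ ~ S (s - mult S).

(* vertex set of G(S): endpoints of edges {x,y} of X (x = y allowed)
   with x + y in X *)
Definition vertexG (S : pred nat) (y : nat) : Prop :=
  inX S y /\ exists x, inX S x /\ inX S (x + y).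

Definition nonloopy (S : pred nat) (y : nat) : Prop := ~ inX S (2 * y).

Definition neighbor (S : pred nat) (y z : nat) : Prop :=
  inX S z /\ inX S (y + z).

(* Main.v *)
Require Import Defs.
From mathcomp Require Import all_boot.
From mathcomp Require Import zify.
From Stdlib Require Import ClassicalEpsilon.

Theorem lemma4p12 (S : pred nat) (y : nat) :
  numerical_semigroup S -> vertexG S y -> nonloopy S y ->
  ~ (exists z, neighbor S y z /\ y < z /\ Sstar S (z - y)).
Proof.
move=> [S0 Sadd [N HN]] [[[Sy y0] _] _] nl [z [[_ [_ Hyz]] [ltyz [Sw _]]]].
have Hm : Sstar S (mult S) /\ forall s, Sstar S s -> mult S <= s.
  suff : exists m, Sstar S m /\ forall s, Sstar S s -> m <= s.
    by move/(epsilon_spec (inhabits 0)).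
  have ex : exists n, S n && (n != 0) by exists N.+1; rewrite HN.
  case: (ex_minnP ex) => m /andP [Sm m0] Hmin.
  exists m; split; first by split.
  by move=> s [Ss s0]; apply: Hmin; rewrite Ss s0.
case: Hm => _ Hmin.
apply: nl; split.
  split; first by rewrite mul2n -addnn; apply: Sadd.
  by rewrite mul2n double_eq0.
move=> h.
have le : mult S <= 2 * y.
  apply: Hmin; split; first by rewrite mul2n -addnn; apply: Sadd.
  by rewrite mul2n double_eq0.
apply: Hyz.
have -> : y + z - mult S = (2 * y - mult S) + (z - y) by lia.
by apply: Sadd.
Qed.
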